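(* Suppose $A,B,C\subset\mathcal R$ are adjacent zones in that order (i.e. $A$ and $B$ are adjacent, $B$ and $C$ are adjacent, and $B$ lies between $A$ and $C$), and that $A$ and $C$ are closed. Then $A\cup B\cup C$ is closed.
   Context: Let $\mathcal R$ be the set of germs at $0$ of analytic arcs $\{x=\alpha(y),\ y\ge 0\}$ in the closed upper half-plane of $\mathbb R^2$, where $\alpha$ is given by a convergent Puiseux series with positive rational exponents. The order $\mathcal O(\gamma)$ of a Puiseux series is the smallest exponent with nonzero coefficient ($\mathcal O(0)=+\infty$). Write $\alpha<\beta$ if $\alpha(y)<\beta(y)$ for all sufficiently small $y>0$. A subset $A\subset\mathcal R$ is a zone (connected) if $\alpha,\beta\in A$, $\alpha<\gamma<\beta$, $\gamma\in\mathcal R$ imply $\gamma\in A$. Distance $d(\alpha,\beta)=1/\mathcal O(\alpha-\beta)$ (with $1/\infty=0$); width $w(A)=\sup\{d(\alpha,\beta):\alpha,\beta\in A\}$. A zone is closed if there exist $\alpha,\beta\in A$ with $d(\alpha,\beta)=w(A)$, and open otherwise. Two zones $A,B$ are adjacent if $A\cup B$ is connected and $A\cap B=\emptyset$. *)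

(* Defs.v *)
From Stdlib Require Import Reals Lra ClassicalEpsilon.
From Coquelicot Require Import Coquelicot.
Open Scope R_scope.

Definition expo (n k : nat) : R := INR (S k) / INR (S n).

(* A representation of a convergent Puiseux series with positive rational
   exponents:  alpha(y) = sum_{k>=0} coef k * y^((k+1)/(den+1)),
   absolutely convergent for some radius rho > 0. *)
Record arc := mkArc {
  den : nat;
  coef : nat -> R;
  conv : exists rho, 0 < rho /\
           ex_series (fun k => Rabs (coef k) * Rpower rho (expo den k))
}.

Definition eval (a : arc) (y : R) : R :=
  Series (fun k => coef a k * Rpower y (expo (den a) k)).

Definition germ_eq (a b : arc) : Prop :=
  exists eps, 0 < eps /\ forall y, 0 < y < eps -> eval a y = eval b y.

(* a predicate on representations that is a set of germs *)
Definition saturated (A : arc -> Prop) : Prop :=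
  forall a b, germ_eq a b -> A a -> A b.

Definition coef_at (a : arc) (r : R) : R :=
  match excluded_middle_informative (exists k, r = expo (den a) k) with
  | left H => coef a (proj1_sig (constructive_indefinite_description _ H))
  | right _ => 0
  end.

Definition ord_is (a b : arc) (r : R) : Prop :=
  coef_at a r - coef_at b r <> 0 /\
  forall s, s < r -> coef_at a s - coef_at b s = 0.

(* d(a,b) = 1 / O(a - b), with 1/oo = 0 *)
Definition dist (a b : arc) : R :=
  match excluded_middle_informative (exists r, ord_is a b r) with
  | left H => / proj1_sig (constructive_indefinite_description _ H)
  | right _ => 0
  end.

Definition arc_lt (a b : arc) : Prop :=
  exists eps, 0 < eps /\ forall y, 0 < y < eps -> eval a y < eval b y.

Definition zone (A : arc -> Prop) : Prop :=
  forall a b g, A a -> A b -> arc_lt a g -> arc_lt g b -> A g.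

Definition width (A : arc -> Prop) : Rbar :=
  Lub_Rbar (fun d => exists a b, A a /\ A b /\ d = dist a b).

Definition closed_zone (A : arc -> Prop) : Prop :=
  exists a b, A a /\ A b /\ width A = Finite (dist a b).

Definition adjacent (A B : arc -> Prop) : Prop :=
  zone (fun g => A g \/ B g) /\ (forall g, A g -> B g -> False).

Definition between (A B C : arc -> Prop) : Prop :=
  forall a b c, A a -> B b -> C c -> arc_lt a b /\ arc_lt b c.

(* Main.v *)
Require Import Defs.
From Stdlib Require Import Reals.
From Coquelicot Require Import Coquelicot.
From Stdlib Require Import Lra Lia Classical ClassicalEpsilon.
From Stdlib Require Wf_nat Compare_dec.
Open Scope R_scope.

Lemma INR_S_pos n : 0 < INR (S n).
Proof. apply lt_0_INR; lia. Qed.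

Lemma expo_pos n k : 0 < expo n k.
Proof. unfold expo. apply Rdiv_lt_0_compat; apply INR_S_pos. Qed.

Lemma expo_eq_iff n k k' : expo n k = expo n k' -> k = k'.
Proof.
  unfold expo. intro H. pose proof (INR_S_pos n).
  assert (INR (S k) = INR (S k')).
  { apply (Rmult_eq_reg_r (/ INR (S n))); [exact H| apply Rgt_not_eq, Rinv_0_lt_compat; lra]. }
  apply INR_eq in H1. lia.
Qed.

Lemma coef_at_expo w k : coef_at w (expo (den w) k) = coef w k.
Proof.
  unfold coef_at. destruct excluded_middle_informative as [H|H].
  - destruct constructive_indefinite_description as [k' Hk']. simpl.
    apply expo_eq_iff in Hk'. subst. reflexivity.
  - exfalso. apply H. eauto.
Qed.

Lemma coef_at_not w r : (forall k, r <> expo (den w) k) -> coef_at w r = 0.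
Proof.
  intro H. unfold coef_at. destruct excluded_middle_informative as [[k Hk]|Hn].
  - exfalso; exact (H k Hk).
  - reflexivity.
Qed.

Lemma coef_at_nz w r : coef_at w r <> 0 -> exists k, r = expo (den w) k.
Proof.
  intro H. destruct (classic (exists k, r = expo (den w) k)) as [E|E]; auto.
  exfalso; apply H, coef_at_not. intros k Hk; apply E; eauto.
Qed.

Definition lat (N j : nat) : R := INR j / INR N.

Lemma expo_lat n m k : expo n k = lat (S n * S m) (S k * S m).
Proof.
  unfold expo, lat. rewrite !mult_INR. pose proof (INR_S_pos n). pose proof (INR_S_pos m).
  field. lra.
Qed.

Lemma diff_lat a b s : coef_at a s - coef_at b s <> 0 ->
  exists j, (1 <= j)%nat /\ s = lat (S (den a) * S (den b)) j.
Proof.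
  intro H.
  destruct (Req_dec (coef_at a s) 0) as [Ha|Ha].
  - assert (coef_at b s <> 0) by lra. destruct (coef_at_nz b s H0) as [k ->].
    exists (S k * S (den a))%nat. split; [lia|].
    rewrite (expo_lat (den b) (den a)). f_equal. lia.
  - destruct (coef_at_nz a s Ha) as [k ->].
    exists (S k * S (den b))%nat. split; [lia|]. apply expo_lat.
Qed.

Lemma lat_pos N j : (1 <= j)%nat -> (1 <= N)%nat -> 0 < lat N j.
Proof. intros. unfold lat. apply Rdiv_lt_0_compat; apply lt_0_INR; lia. Qed.

Lemma lat_lt N j j' : (1 <= N)%nat -> (j < j')%nat -> lat N j < lat N j'.
Proof.
  intros. unfold lat. apply Rmult_lt_compat_r. apply Rinv_0_lt_compat, lt_0_INR; lia.
  apply lt_INR; lia.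
Qed.

Lemma lat_lt_inv N j j' : (1 <= N)%nat -> lat N j < lat N j' -> (j < j')%nat.
Proof.
  intros. destruct (Compare_dec.le_lt_dec j' j); auto.
  assert (lat N j' <= lat N j).
  { destruct (Nat.eq_dec j j'). subst; lra. left; apply lat_lt; lia. }
  lra.
Qed.

Lemma ord_pos a b r : ord_is a b r -> 0 < r.
Proof.
  intros [H _]. destruct (diff_lat a b r H) as [j [Hj ->]]. apply lat_pos; lia.
Qed.

Lemma ord_unique a b r r' : ord_is a b r -> ord_is a b r' -> r = r'.
Proof.
  intros [H1 H2] [H3 H4]. destruct (Rtotal_order r r') as [h|[h|h]]; auto.
  - exfalso; apply H1, H4, h.
  - exfalso; apply H3, H2, h.
Qed.

Lemma dist_ord a b r : ord_is a b r -> Defs.dist a b = / r.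
Proof.
  intro H. unfold Defs.dist. destruct excluded_middle_informative as [E|E].
  - destruct constructive_indefinite_description as [r' Hr']. simpl.
    rewrite (ord_unique _ _ _ _ Hr' H). reflexivity.
  - exfalso; apply E; eauto.
Qed.

Lemma dist_none a b : ~ (exists r, ord_is a b r) -> Defs.dist a b = 0.
Proof.
  intro H. unfold Defs.dist. destruct excluded_middle_informative as [E|E]; [contradiction|auto].
Qed.

Lemma dist_nonneg a b : 0 <= Defs.dist a b.
Proof.
  destruct (classic (exists r, ord_is a b r)) as [[r H]|H].
  - rewrite (dist_ord _ _ _ H). left; apply Rinv_0_lt_compat, (ord_pos _ _ _ H).
  - rewrite dist_none; auto; lra.
Qed.

Lemma ord_sym a b r : ord_is a b r -> ord_is b a r.
Proof.
  intros [H1 H2]. split. lra. intros s Hs. specialize (H2 s Hs). lra.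
Qed.

Lemma dist_sym a b : Defs.dist a b = Defs.dist b a.
Proof.
  destruct (classic (exists r, ord_is a b r)) as [[r H]|H].
  - rewrite (dist_ord _ _ _ H), (dist_ord _ _ _ (ord_sym _ _ _ H)). auto.
  - rewrite (dist_none a b H). rewrite dist_none; auto.
    intros [r Hr]; apply H; exists r; apply ord_sym, Hr.
Qed.

Lemma ord_exists a b s : coef_at a s - coef_at b s <> 0 -> exists r, ord_is a b r.
Proof.
  intro H. apply NNPP. intro Hn.
  set (N := (S (den a) * S (den b))%nat).
  assert (HN : (1 <= N)%nat) by (unfold N; lia).
  assert (forall j, coef_at a (lat N j) - coef_at b (lat N j) = 0).
  { intro j. induction j as [j IH] using (well_founded_induction Wf_nat.lt_wf).
    apply NNPP. intro Hj. apply Hn. exists (lat N j). split; auto.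
    intros s' Hs'. apply NNPP. intro Hs2.
    destruct (diff_lat a b s' Hs2) as [j' [_ Hj']]. fold N in Hj'. subst s'.
    apply Hs2, IH. apply (lat_lt_inv N); auto. }
  destruct (diff_lat a b s H) as [j [_ ->]]. apply H, H0.
Qed.

Lemma none_zero a b : ~ (exists r, ord_is a b r) -> forall s, coef_at a s - coef_at b s = 0.
Proof.
  intros H s. apply NNPP. intro Hs. apply H. eapply ord_exists; eauto.
Qed.

Lemma ord_le a b r s : ord_is a b r -> coef_at a s - coef_at b s <> 0 -> r <= s.
Proof.
  intros [_ H] Hs. destruct (Rle_lt_dec r s); auto. exfalso; apply Hs, H; auto.
Qed.

Lemma ultra a b c : Defs.dist a c <= Rmax (Defs.dist a b) (Defs.dist b c).
Proof.
  destruct (classic (exists r, ord_is a c r)) as [[r H]|H].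
  - rewrite (dist_ord _ _ _ H). pose proof (ord_pos _ _ _ H) as Hr.
    destruct H as [H1 H2].
    destruct (Req_dec (coef_at a r - coef_at b r) 0) as [E|E].
    + assert (E2 : coef_at b r - coef_at c r <> 0) by lra.
      destruct (ord_exists _ _ _ E2) as [p Hp].
      pose proof (ord_le _ _ _ _ Hp E2). pose proof (ord_pos _ _ _ Hp).
      rewrite (dist_ord _ _ _ Hp). eapply Rle_trans; [|apply Rmax_r].
      apply Rinv_le_contravar; lra.
    + destruct (ord_exists _ _ _ E) as [p Hp].
      pose proof (ord_le _ _ _ _ Hp E). pose proof (ord_pos _ _ _ Hp).
      rewrite (dist_ord _ _ _ Hp). eapply Rle_trans; [|apply Rmax_l].
      apply Rinv_le_contravar; lra.
  - rewrite dist_none; auto. eapply Rle_trans; [apply dist_nonneg|apply Rmax_l].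
Qed.

Fixpoint fsum (f : nat -> R) (n : nat) : R :=
  match n with O => 0 | S n => fsum f n + f n end.

Lemma fsum_S_sum f n : fsum f (S n) = sum_f_R0 f n.
Proof. induction n; simpl in *; [lra|]. rewrite <- IHn. simpl. lra. Qed.

Lemma fsum_minus f g n : fsum (fun k => f k - g k) n = fsum f n - fsum g n.
Proof. induction n; simpl; lra. Qed.

Lemma fsum_zero f n : (forall k, (k < n)%nat -> f k = 0) -> fsum f n = 0.
Proof.
  induction n; simpl; intros; auto. rewrite IHn; [rewrite H; [lra|lia]|]. intros; apply H; lia.
Qed.

Lemma exp_le x y : x <= y -> exp x <= exp y.
Proof. intros [h|h]; [left; apply exp_increasing; auto| subst; lra]. Qed.

Lemma Rpower_pos y e : 0 < Rpower y e.
Proof. unfold Rpower; apply exp_pos. Qed.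

Definition term (w : arc) (y : R) (k : nat) := coef w k * Rpower y (expo (den w) k).

Lemma expo_mono n k k' : (k <= k')%nat -> expo n k <= expo n k'.
Proof.
  intros. unfold expo. apply Rmult_le_compat_r. left; apply Rinv_0_lt_compat, INR_S_pos.
  apply le_INR; lia.
Qed.

Lemma series_split a K : ex_series a -> Series a = fsum a K + Series (fun k => a (K + k)%nat).
Proof.
  intro H. destruct K.
  - simpl. rewrite Rplus_0_l. apply Series_ext. intros; reflexivity.
  - rewrite (Series_incr_n a (S K)); [|lia|auto]. simpl Init.Nat.pred. rewrite fsum_S_sum. reflexivity.
Qed.

Lemma abs_term_le w y rho k : 0 < y <= rho ->
  Rabs (term w y k) <= Rabs (coef w k) * Rpower rho (expo (den w) k).
Proof.
  intros Hy. unfold term. rewrite Rabs_mult. rewrite (Rabs_pos_eq (Rpower _ _)); [|left; apply Rpower_pos].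
  apply Rmult_le_compat_l. apply Rabs_pos. apply Rle_Rpower_l; [left; apply expo_pos|lra].
Qed.

Lemma tail_bound w : exists rho, 0 < rho /\ forall K, exists M, 0 <= M /\
  forall y, 0 < y <= rho -> Rabs (eval w y - fsum (term w y) K) <= M * Rpower y (expo (den w) K).
Proof.
  destruct (conv w) as [rho [Hrho Hs]]. exists rho. split; auto. intro K.
  set (eK := expo (den w) K).
  set (S0 := Series (fun k => Rabs (coef w (K + k)%nat) * Rpower rho (expo (den w) (K + k)%nat))).
  assert (HsK : ex_series (fun k => Rabs (coef w (K + k)%nat) * Rpower rho (expo (den w) (K + k)%nat))).
  { apply (ex_series_incr_n (fun k => Rabs (coef w k) * Rpower rho (expo (den w) k)) K). auto. }
  exists (S0 / Rpower rho eK). split.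
  { unfold Rdiv. apply Rmult_le_pos; [|left; apply Rinv_0_lt_compat, Rpower_pos].
    unfold S0.
    match goal with |- 0 <= Series ?b =>
      assert (Hz : Series (fun k => 0 * b k) <= Series b) by
        (apply Series_le; [intro k; split; [lra|]; rewrite Rmult_0_l; apply Rmult_le_pos; [apply Rabs_pos|left; apply Rpower_pos] | auto]);
      rewrite Series_scal_l in Hz; lra end. }
  intros y Hy.
  assert (Habs : ex_series (fun k => Rabs (term w y k))).
  { apply (@ex_series_le R_AbsRing R_CompleteNormedModule (fun k => Rabs (term w y k)) (fun k => Rabs (coef w k) * Rpower rho (expo (den w) k))); [|exact Hs]. intro k. change (norm (Rabs (term w y k))) with (Rabs (Rabs (term w y k))).
    rewrite Rabs_Rabsolu. apply abs_term_le; auto. }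
  assert (Hex : ex_series (term w y)) by (apply ex_series_Rabs; auto).
  unfold eval. fold (term w y).
  rewrite (series_split _ K Hex). replace (fsum (term w y) K + Series (fun k => term w y (K + k)%nat) - fsum (term w y) K)
    with (Series (fun k => term w y (K + k)%nat)) by ring.
  assert (HabsK : ex_series (fun k => Rabs (term w y (K + k)%nat))).
  { apply (ex_series_incr_n (fun k => Rabs (term w y k)) K). auto. }
  eapply Rle_trans; [apply Series_Rabs; auto|].
  replace (S0 / Rpower rho eK * Rpower y eK) with (Series (fun k => Rabs (coef w (K + k)%nat) * Rpower rho (expo (den w) (K + k)%nat) * (Rpower y eK / Rpower rho eK))).
  2:{ rewrite Series_scal_r. unfold S0. field. apply Rgt_not_eq, Rpower_pos. }
  apply Series_le; [|apply ex_series_scal_r; auto].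
  intro k. split; [apply Rabs_pos|].
  unfold term. rewrite Rabs_mult. rewrite (Rabs_pos_eq (Rpower y _)); [|left; apply Rpower_pos].
  rewrite Rmult_assoc. apply Rmult_le_compat_l; [apply Rabs_pos|].
  pose proof (expo_mono (den w) K (K + k)%nat ltac:(lia)) as Hm. fold eK in Hm.
  set (e' := expo (den w) (K + k)) in *.
  assert (Hl : ln y <= ln rho) by (apply ln_le; lra).
  apply (Rmult_le_reg_r (Rpower rho eK)); [apply Rpower_pos|].
  unfold Rdiv. rewrite !Rmult_assoc, Rinv_l, Rmult_1_r; [|apply Rgt_not_eq, Rpower_pos].
  unfold Rpower. rewrite <- !exp_plus. apply exp_le. nra.
Qed.

Lemma lat_inj N j j' : (1 <= N)%nat -> lat N j = lat N j' -> j = j'.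
Proof.
  intros HN H. destruct (Nat.lt_total j j') as [h|[h|h]]; auto.
  - pose proof (lat_lt N j j' HN h). lra.
  - pose proof (lat_lt N j' j HN h). lra.
Qed.

Lemma expo_lat_gen p Q N k : (1 <= Q)%nat -> N = (S p * Q)%nat -> expo p k = lat N (S k * Q).
Proof.
  intros HQ ->. unfold expo, lat. rewrite !mult_INR. pose proof (INR_S_pos p).
  assert (0 < INR Q) by (apply lt_0_INR; lia). field. lra.
Qed.

Lemma lattice_sum w Q N y : (1 <= Q)%nat -> N = (S (den w) * Q)%nat -> forall J,
  fsum (fun j => coef_at w (lat N (S j)) * Rpower y (lat N (S j))) J = fsum (term w y) (J / Q).
Proof.
  intros HQ HN J. induction J.
  - rewrite Nat.div_0_l; [reflexivity|lia].
  - simpl fsum. rewrite IHJ.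
    pose proof (Nat.div_mod_eq J Q) as E. pose proof (Nat.mod_upper_bound J Q ltac:(lia)) as Hm.
    set (q := (J / Q)%nat) in *. set (t := (J mod Q)%nat) in *.
    destruct (Nat.eq_dec (S t) Q) as [Et|Et].
    + assert (Hq : S q = (S J / Q)%nat) by (apply (Nat.div_unique _ _ _ 0); lia).
      rewrite <- Hq. simpl fsum. f_equal.
      assert (lat N (S J) = expo (den w) q).
      { rewrite (expo_lat_gen (den w) Q N q HQ HN). f_equal. lia. }
      rewrite H, coef_at_expo. reflexivity.
    + assert (Hq : q = (S J / Q)%nat) by (apply (Nat.div_unique _ _ _ (S t)); lia).
      rewrite <- Hq. rewrite coef_at_not; [ring|].
      intros k Hk. rewrite (expo_lat_gen (den w) Q N k HQ HN) in Hk.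
      apply lat_inj in Hk; [|subst N; lia].
      assert (k < q \/ q <= k)%nat as [h|h] by lia.
      * assert (S k * Q <= q * Q)%nat by (apply Nat.mul_le_mono_r; lia). lia.
      * assert (S q * Q <= S k * Q)%nat by (apply Nat.mul_le_mono_r; lia). lia.
Qed.

Lemma eventually_neg D Mu Mv t : D < 0 -> 0 <= Mu -> 0 <= Mv -> 0 < t ->
  exists eps, 0 < eps /\ eps <= 1 /\ forall y, 0 < y < eps -> (Mu + Mv) * Rpower y t < - D.
Proof.
  intros HD HMu HMv Ht.
  set (d := - D / (Mu + Mv + 1)).
  assert (Hd : 0 < d) by (unfold d; apply Rdiv_lt_0_compat; lra).
  exists (Rmin 1 (Rpower d (/ t))). repeat split.
  - apply Rmin_pos; [lra|apply Rpower_pos].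
  - apply Rmin_l.
  - intros y [Hy1 Hy2].
    assert (y < Rpower d (/ t)) by (eapply Rlt_le_trans; [exact Hy2|apply Rmin_r]).
    assert (Rpower y t < d).
    { unfold Rpower in *. apply ln_increasing in H; auto. rewrite ln_exp in H.
      rewrite <- (exp_ln d); auto. apply exp_increasing.
      apply (Rmult_lt_compat_l t) in H; auto. rewrite <- Rmult_assoc, Rinv_r, Rmult_1_l in H; lra. }
    assert (0 < Rpower y t) by apply Rpower_pos.
    assert ((Mu + Mv) * Rpower y t <= (Mu + Mv) * d) by (apply Rmult_le_compat_l; lra).
    assert (- D = (Mu + Mv + 1) * d) by (unfold d; field; lra).
    nra.
Qed.

Lemma keyK u v r : ord_is u v r -> coef_at u r - coef_at v r < 0 -> ~ arc_lt v u.
Proof.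
  intros Hord HD [eps2 [Heps2 Hlt]].
  set (n := den u). set (m := den v). set (N := (S n * S m)%nat).
  destruct Hord as [Hnz Hbelow].
  destruct (diff_lat u v r Hnz) as [j0 [Hj0 Hr]]. fold n m N in Hr.
  assert (HN : (1 <= N)%nat) by (unfold N; lia).
  set (D := coef_at u r - coef_at v r) in *.
  destruct (tail_bound u) as [ru [Hru Tu]]. destruct (tail_bound v) as [rv [Hrv Tv]].
  set (Ku := (j0 / S m)%nat). set (Kv := (j0 / S n)%nat).
  destruct (Tu Ku) as [Mu [HMu Bu]]. destruct (Tv Kv) as [Mv [HMv Bv]].
  set (eu := expo n Ku). set (ev := expo m Kv).
  assert (Heu : r < eu).
  { unfold eu. rewrite (expo_lat_gen n (S m) N Ku ltac:(lia) eq_refl), Hr. apply lat_lt; auto.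
    pose proof (Nat.div_mod_eq j0 (S m)). pose proof (Nat.mod_upper_bound j0 (S m) ltac:(lia)).
    fold Ku in H. nia. }
  assert (Hev : r < ev).
  { unfold ev. rewrite (expo_lat_gen m (S n) N Kv ltac:(lia) ltac:(unfold N; lia)), Hr. apply lat_lt; auto.
    pose proof (Nat.div_mod_eq j0 (S n)). pose proof (Nat.mod_upper_bound j0 (S n) ltac:(lia)).
    fold Kv in H. nia. }
  set (t := Rmin eu ev - r).
  assert (Ht : 0 < t) by (unfold t; apply Rmin_case; lra).
  destruct (eventually_neg D Mu Mv t HD HMu HMv Ht) as [e1 [He1 [He11 Hne]]].
  set (y := Rmin (Rmin eps2 e1) (Rmin ru rv) / 2).
  assert (Hmin : 0 < Rmin (Rmin eps2 e1) (Rmin ru rv)) by (repeat apply Rmin_pos; lra).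
  assert (Hy0 : 0 < y) by (unfold y; lra).
  assert (Hyl : y < Rmin (Rmin eps2 e1) (Rmin ru rv)) by (unfold y; lra).
  assert (Hy1 : y < eps2) by (eapply Rlt_le_trans; [exact Hyl|]; eapply Rle_trans; apply Rmin_l).
  assert (Hy2 : y < e1) by (eapply Rlt_le_trans; [exact Hyl|]; eapply Rle_trans; [apply Rmin_l|apply Rmin_r]).
  assert (Hy3 : y < ru) by (eapply Rlt_le_trans; [exact Hyl|]; eapply Rle_trans; [apply Rmin_r|apply Rmin_l]).
  assert (Hy4 : y < rv) by (eapply Rlt_le_trans; [exact Hyl|]; eapply Rle_trans; [apply Rmin_r|apply Rmin_r]).
  specialize (Hlt y ltac:(lra)). specialize (Hne y ltac:(lra)).
  specialize (Bu y ltac:(lra)). specialize (Bv y ltac:(lra)).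
  pose proof (lattice_sum u (S m) N y ltac:(lia) eq_refl j0) as Lu.
  pose proof (lattice_sum v (S n) N y ltac:(lia) ltac:(unfold N, m; lia) j0) as Lv.
  fold Ku in Lu. fold Kv in Lv. fold n in Bu. fold m in Bv. fold eu in Bu. fold ev in Bv.
  rewrite <- Lu in Bu. rewrite <- Lv in Bv.
  assert (Hdiff : fsum (fun j => coef_at u (lat N (S j)) * Rpower y (lat N (S j))) j0
                - fsum (fun j => coef_at v (lat N (S j)) * Rpower y (lat N (S j))) j0 = D * Rpower y r).
  { rewrite <- fsum_minus. destruct j0 as [|j1]; [lia|]. simpl fsum.
    rewrite fsum_zero.
    - rewrite Hr. unfold D. rewrite Hr. ring.
    - intros k Hk. assert (E : coef_at u (lat N (S k)) - coef_at v (lat N (S k)) = 0).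
      { apply Hbelow. rewrite Hr. apply lat_lt; auto; lia. }
      rewrite <- Rmult_minus_distr_r, E. ring. }
  assert (Hln : ln y < 0) by (rewrite <- ln_1; apply ln_increasing; lra).
  assert (Pu : Rpower y eu <= Rpower y r * Rpower y t).
  { unfold Rpower. rewrite <- exp_plus. apply exp_le.
    assert (r + t <= eu) by (unfold t; pose proof (Rmin_l eu ev); lra). nra. }
  assert (Pv : Rpower y ev <= Rpower y r * Rpower y t).
  { unfold Rpower. rewrite <- exp_plus. apply exp_le.
    assert (r + t <= ev) by (unfold t; pose proof (Rmin_r eu ev); lra). nra. }
  assert (Pr : 0 < Rpower y r) by apply Rpower_pos.
  assert (Pt : 0 < Rpower y t) by apply Rpower_pos.
  apply Rabs_le_between in Bu. apply Rabs_le_between in Bv.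
  assert (Mu * Rpower y eu <= Mu * (Rpower y r * Rpower y t)) by (apply Rmult_le_compat_l; lra).
  assert (Mv * Rpower y ev <= Mv * (Rpower y r * Rpower y t)) by (apply Rmult_le_compat_l; lra).
  assert (Rpower y r * ((Mu + Mv) * Rpower y t) < Rpower y r * (- D)) by (apply Rmult_lt_compat_l; lra).
  nra.
Qed.

Lemma between_dist a x c :
  ((arc_lt a x /\ arc_lt x c) \/ (arc_lt c x /\ arc_lt x a)) ->
  Defs.dist a x <= Defs.dist a c.
Proof.
  intro Hb.
  destruct (classic (exists r, ord_is a x r)) as [[r H]|H].
  2:{ rewrite dist_none; auto. apply dist_nonneg. }
  destruct (Rle_or_lt (Defs.dist a x) (Defs.dist a c)) as [h|h]; auto. exfalso.
  rewrite (dist_ord _ _ _ H) in h. pose proof (ord_pos _ _ _ H) as Hr.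
  assert (Z : forall s, s <= r -> coef_at c s - coef_at a s = 0).
  { intros s Hs.
    destruct (classic (exists p, ord_is a c p)) as [[p Hp]|Hp].
    - rewrite (dist_ord _ _ _ Hp) in h. pose proof (ord_pos _ _ _ Hp).
      assert (r < p).
      { destruct (Rlt_or_le r p); auto. assert (/ r <= / p) by (apply Rinv_le_contravar; lra). lra. }
      destruct Hp as [_ Hp]. specialize (Hp s ltac:(lra)). lra.
    - pose proof (none_zero _ _ Hp s). lra. }
  destruct H as [H1 H2].
  assert (O1 : ord_is x a r).
  { split. lra. intros s Hs. specialize (H2 s Hs). lra. }
  assert (O2 : ord_is c x r).
  { split. pose proof (Z r (Rle_refl r)). lra. intros s Hs. specialize (H2 s Hs).
    pose proof (Z s ltac:(lra)). lra. }
  assert (O3 := ord_sym _ _ _ O2).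
  assert (O4 := ord_sym _ _ _ O1).
  pose proof (Z r (Rle_refl r)) as Zr.
  destruct (Rlt_or_le (coef_at x r - coef_at a r) 0) as [D|D].
  - destruct Hb as [[B1 B2]|[B1 B2]].
    + exact (keyK _ _ _ O1 D B1).
    + apply (keyK _ _ _ O3 ltac:(lra) B1).
  - assert (coef_at x r - coef_at a r <> 0) by lra.
    destruct Hb as [[B1 B2]|[B1 B2]].
    + apply (keyK _ _ _ O2 ltac:(lra) B2).
    + apply (keyK _ _ _ O4 ltac:(lra) B2).
Qed.

Lemma width_bound (A : arc -> Prop) a1 a2 x y :
  Defs.width A = Finite (Defs.dist a1 a2) -> A x -> A y -> Defs.dist x y <= Defs.dist a1 a2.
Proof.
  intros W Hx Hy. pose proof (Lub_Rbar_correct (fun d => exists a b, A a /\ A b /\ d = Defs.dist a b)) as [U _].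
  unfold Defs.width in W. rewrite W in U. apply (U (Defs.dist x y)). exists x, y; auto.
Qed.

Theorem lemma5p6 (A B C : arc -> Prop) :
  saturated A -> saturated B -> saturated C ->
  zone A -> zone B -> zone C ->
  adjacent A B -> adjacent B C ->
  (exists b, B b) ->
  (between A B C \/ between C B A) ->
  closed_zone A -> closed_zone C ->
  closed_zone (fun g => A g \/ B g \/ C g).
Proof.
  intros _ _ _ _ _ _ _ _ _ Hbet [a1 [a2 [Ha1 [Ha2 WA]]]] [c1 [c2 [Hc1 [Hc2 WC]]]].
  set (W0 := Rmax (Defs.dist a1 a2) (Rmax (Defs.dist c1 c2) (Defs.dist a1 c1))).
  assert (Hx : forall x, A x \/ B x \/ C x -> Defs.dist a1 x <= W0).
  { intros x [Hx|[Hx|Hx]]; unfold W0.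
    - eapply Rle_trans; [|apply Rmax_l]. eapply width_bound; eauto.
    - eapply Rle_trans; [|eapply Rle_trans; [|apply Rmax_r]; apply Rmax_r].
      apply between_dist. destruct Hbet as [Hb|Hb].
      + left. apply (Hb a1 x c1); auto.
      + right. destruct (Hb c1 x a1); auto.
    - eapply Rle_trans; [apply (ultra a1 c1 x)|].
      apply Rmax_lub.
      + eapply Rle_trans; [|eapply Rle_trans; [|apply Rmax_r]; apply Rmax_r]. lra.
      + eapply Rle_trans; [|eapply Rle_trans; [|apply Rmax_r]; apply Rmax_l].
        eapply width_bound; eauto. }
  assert (Hall : forall x y, (A x \/ B x \/ C x) -> (A y \/ B y \/ C y) -> Defs.dist x y <= W0).
  { intros x y Hx' Hy'. eapply Rle_trans; [apply (ultra x a1 y)|].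
    rewrite dist_sym. apply Rmax_lub; auto. }
  assert (Hpair : exists p q, (A p \/ B p \/ C p) /\ (A q \/ B q \/ C q) /\ W0 = Defs.dist p q).
  { unfold W0. unfold Rmax at 2. destruct Rle_dec.
    - unfold Rmax. destruct Rle_dec.
      + exists a1, c1. auto.
      + exists a1, a2. auto.
    - unfold Rmax. destruct Rle_dec.
      + exists c1, c2. auto.
      + exists a1, a2. auto. }
  destruct Hpair as [p [q [Hp [Hq E]]]].
  exists p, q. split; auto. split; auto. rewrite <- E.
  apply is_lub_Rbar_unique. split.
  - intros d [x [y [Hx' [Hy' ->]]]]. simpl. apply Hall; auto.
  - intros b Hb. apply Hb. exists p, q. auto.
Qed.
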